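(* Let $\mathcal{C}$ be an abelian $k$-linear category, $\mathcal{E}=(E_i)_{i\in\mathbb{Z}}$ a coherent sequence in $\mathcal{C}$, and $A=A(\mathcal{E})$ the corresponding $\mathbb{Z}$-algebra. Then (i) for every $X\in\mathcal{C}$ and every $m\in\mathbb{Z}$ the $A$-module $\Gamma_{\le m}X$ is coherent; (ii) the $\mathbb{Z}$-algebra $A$ is coherent.
   Context: $k$ is a fixed field. A $\mathbb{Z}$-algebra is an associative $k$-algebra $A=\bigoplus_{i\le j}A_{ij}$ with $A_{ii}=k$, only nonzero products $A_{jk}\otimes A_{ij}\to A_{ik}$, units acting as identity, $\dim A_{ij}<\infty$. An $A$-module is a graded right module $M=\bigoplus_iM_i$ with action $M_j\otimes A_{ij}\to M_i$. $P_j=\bigoplus_iA_{ij}$; $S_j$ is $k$ in degree $j$, $0$ elsewhere; $\mathcal{P}$ = finite direct sums of $P_j$'s. $M$ is finitely generated if a quotient of some $P\in\mathcal{P}$; coherent if finitely generated and every kernel of a map $P\to M$, $P\in\mathcal{P}$, is finitely generated. $A$ is coherent if all $P_j$, $S_j$ are coherent. Sequences $\mathcal{E}=(E_i)$ are assumed to satisfy $\dim_k\operatorname{Hom}(E_i,X)<\infty$ for all $X\in\mathcal{C}$. $A(\mathcal{E})$ has $A_{ij}=\operatorname{Hom}(E_i,E_j)$ for $i<j$, $A_{ii}=k$, multiplication by composition. $\Gamma_{\le m}X=\bigoplus_{i\le m}\operatorname{Hom}(E_i,X)$. $\mathcal{E}$ is projective if for every surjection $X\to Y$ there is $n$ with $\operatorname{Hom}(E_i,X)\to\operatorname{Hom}(E_i,Y)$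 surjective for $i<n$; a projective sequence is coherent if for every $X$ and $m$ there are $i_1,\dots,i_s\le m$ with $\bigoplus_j\operatorname{Hom}(E_{i_j},X)\otimes\operatorname{Hom}(E_i,E_{i_j})\to\operatorname{Hom}(E_i,X)$ surjective for $i\ll0$. *)

(* Defs.v *)
From HB Require Import structures.
From mathcomp Require Import all_boot all_order all_algebra.
From Stdlib Require Import ClassicalEpsilon.
Set Implicit Arguments. Unset Strict Implicit. Unset Printing Implicit Defensive.
Import Order.TTheory GRing.Theory Num.Theory.
Local Open Scope ring_scope.

Definition Kl (k : fieldType) : lmodType k := GRing.Lmodule.clone k k^o _.
Definition Zl (k : fieldType) : lmodType k := GRing.Lmodule.clone k 'rV[k]_0 _.
Definition prodL (k : fieldType) (V W : lmodType k) : lmodType k :=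
  GRing.Lmodule.clone k (V * W)%type _.

Definition fin_dim (k : fieldType) (V : lmodType k) : Prop :=
  exists (n : nat) (v : 'I_n -> V),
    forall x : V, exists c : 'I_n -> k, x = \sum_(t < n) c t *: v t.

Record kcat (k : fieldType) := KCat {
  ob : Type;
  hom : ob -> ob -> lmodType k;
  idm : forall X, hom X X;
  comp : forall X Y Z, hom Y Z -> hom X Y -> hom X Z }.
Arguments ob {k} _.
Arguments hom {k} _ _ _.
Arguments idm {k _} _.
Arguments comp {k _ _ _ _}.

Section Cat.
Variables (k : fieldType) (C : kcat k).

Definition klinear_cat : Prop :=
  (forall (X Y Z W : ob C) (h : hom C Z W) (g : hom C Y Z) (f : hom C X Y),
      comp h (comp g f) = comp (comp h g) f) /\
  (forall (X Y : ob C) (f : hom C X Y), comp (idm Y) f = f) /\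
  (forall (X Y : ob C) (f : hom C X Y), comp f (idm X) = f) /\
  (forall (X Y Z : ob C) (c : k) (g g' : hom C Y Z) (f : hom C X Y),
      comp (c *: g + g') f = c *: comp g f + comp g' f) /\
  (forall (X Y Z : ob C) (c : k) (g : hom C Y Z) (f f' : hom C X Y),
      comp g (c *: f + f') = c *: comp g f + comp g f').

Definition mono (X Y : ob C) (f : hom C X Y) : Prop :=
  forall (W : ob C) (g h : hom C W X), comp f g = comp f h -> g = h.
Definition epi (X Y : ob C) (f : hom C X Y) : Prop :=
  forall (W : ob C) (g h : hom C Y W), comp g f = comp h f -> g = h.

Definition is_kernel (X Y : ob C) (f : hom C X Y) (K : ob C) (u : hom C K X) :=
  comp f u = 0 /\
  forall (W : ob C) (g : hom C W X), comp f g = 0 ->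
    exists h : hom C W K, comp u h = g /\ forall h', comp u h' = g -> h' = h.
Definition is_cokernel (X Y : ob C) (f : hom C X Y) (Q : ob C) (q : hom C Y Q) :=
  comp q f = 0 /\
  forall (W : ob C) (g : hom C Y W), comp g f = 0 ->
    exists h : hom C Q W, comp h q = g /\ forall h', comp h' q = g -> h' = h.

Arguments is_kernel {X Y} f K u.
Arguments is_cokernel {X Y} f Q q.

Definition abelian : Prop :=
  klinear_cat /\
  (exists Z : ob C, forall X : ob C,
      (forall f g : hom C X Z, f = g) /\ (forall f g : hom C Z X, f = g)) /\
  (forall X Y : ob C, exists (S : ob C) (i1 : hom C X S) (i2 : hom C Y S)
      (p1 : hom C S X) (p2 : hom C S Y),
      [/\ comp p1 i1 = idm X, comp p2 i2 = idm Y, comp p1 i2 = 0,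
          comp p2 i1 = 0 & comp i1 p1 + comp i2 p2 = idm S]) /\
  (forall (X Y : ob C) (f : hom C X Y), exists K u, is_kernel f K u) /\
  (forall (X Y : ob C) (f : hom C X Y), exists Q q, is_cokernel f Q q) /\
  (forall (X Y : ob C) (f : hom C X Y), mono f ->
      exists (W : ob C) (g : hom C Y W), is_kernel g X f) /\
  (forall (X Y : ob C) (f : hom C X Y), epi f ->
      exists (W : ob C) (g : hom C W X), is_cokernel g Y f).

Definition homfin_seq (E : int -> ob C) : Prop :=
  forall (i : int) (X : ob C), fin_dim (hom C (E i) X).

Definition projective_seq (E : int -> ob C) : Prop :=
  forall (X Y : ob C) (f : hom C X Y), epi f ->
    exists n : int, forall i : int, i < n ->
      forall g : hom C (E i) Y, exists g' : hom C (E i) X, comp f g' = g.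

(* the image of  (+)_j Hom(E_{i_j},X) (x) Hom(E_i,E_{i_j}) -> Hom(E_i,X)
   consists of finite sums of compositions f o h with f, h in some summand *)
Definition coherent_seq (E : int -> ob C) : Prop :=
  projective_seq E /\
  forall (X : ob C) (m : int), exists s : seq int,
    all (fun j => j <= m) s /\
    exists n : int, forall i : int, i < n -> forall g : hom C (E i) X,
      exists (N : nat) (js : 'I_N -> int)
             (f : forall t, hom C (E (js t)) X) (h : forall t, hom C (E i) (E (js t))),
        (forall t, js t \in s) /\ g = \sum_(t < N) comp (f t) (h t).
End Cat.

(* Z-algebras: zc i j is A_ij, zmul : A_jl (x) A_ij -> A_il *)
Record zalg (k : fieldType) := ZAlg {
  zc : int -> int -> lmodType k;
  zmul : forall i j l, zc j l -> zc i j -> zc i l;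
  zone : forall i, zc i i }.
Arguments zc {k}.
Arguments zmul {k _ i j l}.
Arguments zone {k} _ _.

(* graded right modules: act : M_j (x) A_ij -> M_i *)
Record zmod (k : fieldType) (A : zalg k) := ZMod {
  mc : int -> lmodType k;
  act : forall i j, mc j -> zc A i j -> mc i }.
Arguments mc {k A}.
Arguments act {k _ _ i j}.

Section Modules.
Variables (k : fieldType) (A : zalg k).

Record zhom (M N : zmod A) := ZHom { hf : forall i, mc M i -> mc N i }.
Arguments hf {M N}.

Definition is_zhom (M N : zmod A) (phi : zhom M N) : Prop :=
  (forall i (c : k) (x y : mc M i), hf phi i (c *: x + y) = c *: hf phi i x + hf phi i y) /\
  (forall i j (x : mc M j) (a : zc A i j), hf phi i (act x a) = act (hf phi j x) a).

Definition Pmod (j : int) : zmod A :=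
  @ZMod k A (fun i => zc A i j) (fun i l (x : zc A l j) (a : zc A i l) => zmul x a).

Definition Scar (j i : int) : lmodType k := if i == j then Kl k else Zl k.
Definition Sto (j i : int) : Scar j i -> k :=
  match i == j as b return ((if b then Kl k else Zl k) : lmodType k) -> k with
  | true => fun x => x | false => fun _ => 0 end.
Definition Sof (j i : int) : k -> Scar j i :=
  match i == j as b return k -> ((if b then Kl k else Zl k) : lmodType k) with
  | true => fun x => x | false => fun _ => 0 end.
(* the scalar c with a = c * 1 for a in A_ii = k (arbitrary if i <> l) *)
Definition dcoef (i l : int) (a : zc A i l) : k :=
  epsilon (inhabits 0) (fun c : k =>
    forall e : l = i, eq_rect l (zc A i) a i e = c *: zone A i).
Definition Smod (j : int) : zmod A :=
  @ZMod k A (Scar j) (fun i l (x : Scar j l) (a : zc A i l) => Sof j i (dcoef a * Sto x)).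

Definition zero_mod : zmod A := @ZMod k A (fun _ => Zl k) (fun _ _ _ _ => 0).
Definition sum_mod (M N : zmod A) : zmod A :=
  @ZMod k A (fun i => prodL (mc M i) (mc N i))
    (fun i j (x : prodL (mc M j) (mc N j)) (a : zc A i j) =>
       ((act x.1 a, act x.2 a) : prodL (mc M i) (mc N i))).
Definition Pfree (js : seq int) : zmod A := foldr (fun j P => sum_mod (Pmod j) P) zero_mod js.

Definition fg_sub (M : zmod A) (S : forall i, mc M i -> Prop) : Prop :=
  exists (js : seq int) (psi : zhom (Pfree js) M),
    is_zhom psi /\ forall i (y : mc M i), S i y <-> exists x, hf psi i x = y.

Definition fin_gen (M : zmod A) : Prop := @fg_sub M (fun _ _ => True).

Definition coherent_mod (M : zmod A) : Prop :=
  fin_gen M /\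
  forall (js : seq int) (phi : zhom (Pfree js) M), is_zhom phi ->
    @fg_sub (Pfree js) (fun i x => hf phi i x = 0).
End Modules.

Definition coherent_zalg (k : fieldType) (A : zalg k) : Prop :=
  forall j : int, coherent_mod (Pmod A j) /\ coherent_mod (Smod A j).

Section AE.
Variables (k : fieldType) (C : kcat k) (E : int -> ob C).

Definition AEc (i j : int) : lmodType k :=
  if i < j then hom C (E i) (E j) else if i == j then Kl k else Zl k.

Definition AE_toHom (i j : int) : AEc i j -> hom C (E i) (E j) :=
  match i < j as b return
        ((if b then hom C (E i) (E j) else if i == j then Kl k else Zl k) : lmodType k)
        -> hom C (E i) (E j) with
  | true => fun x => x | false => fun _ => 0 end.
Definition AE_toK (i j : int) : AEc i j -> k :=
  match i < j as b return
        ((if b then hom C (E i) (E j) else if i == j then Kl k else Zl k) : lmodType k)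
        -> k with
  | true => fun _ => 0
  | false => fun x =>
      (match i == j as b return ((if b then Kl k else Zl k) : lmodType k) -> k with
       | true => fun y => y | false => fun _ => 0 end) x end.
Definition AE_ofHom (i j : int) : hom C (E i) (E j) -> AEc i j :=
  match i < j as b return hom C (E i) (E j) ->
        ((if b then hom C (E i) (E j) else if i == j then Kl k else Zl k) : lmodType k) with
  | true => fun f => f | false => fun _ => 0 end.
Definition AE_ofK (i j : int) : k -> AEc i j :=
  match i < j as b return k ->
        ((if b then hom C (E i) (E j) else if i == j then Kl k else Zl k) : lmodType k) with
  | true => fun _ => 0
  | false => fun c =>
      (match i == j as b return ((if b then Kl k else Zl k) : lmodType k) with
       | true => c | false => 0 end) end.

Definition idh (i j : int) : hom C (E i) (E j) :=
  match i =P j with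
  | ReflectT e => eq_rect i (fun l => hom C (E i) (E l)) (idm (E i)) j e
  | ReflectF _ => 0 end.

Definition AE_emb (i j : int) (a : AEc i j) : hom C (E i) (E j) :=
  AE_toHom a + AE_toK a *: idh i j.

Definition AE_mul (i j l : int) (b : AEc j l) (a : AEc i j) : AEc i l :=
  if i < l then @AE_ofHom i l (comp (AE_emb b) (AE_emb a))
  else AE_ofK i l (AE_toK a * AE_toK b).

Definition AE : zalg k := @ZAlg k AEc AE_mul (fun i => AE_ofK i i 1).

Definition Gc (X : ob C) (m i : int) : lmodType k :=
  if i <= m then hom C (E i) X else Zl k.
Definition G_to (X : ob C) (m i : int) : Gc X m i -> hom C (E i) X :=
  match i <= m as b return ((if b then hom C (E i) X else Zl k) : lmodType k)
                           -> hom C (E i) X with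
  | true => fun x => x | false => fun _ => 0 end.
Definition G_of (X : ob C) (m i : int) : hom C (E i) X -> Gc X m i :=
  match i <= m as b return hom C (E i) X ->
                           ((if b then hom C (E i) X else Zl k) : lmodType k) with
  | true => fun x => x | false => fun _ => 0 end.

Definition Gamma_le (m : int) (X : ob C) : zmod AE :=
  @ZMod k AE (Gc X m)
    (fun i j (x : Gc X m j) (a : AEc i j) => @G_of X m i (comp (G_to x) (AE_emb a))).
End AE.

(* Main.v *)
Require Import Defs.
From HB Require Import structures.
From mathcomp Require Import all_boot all_order all_algebra.
From mathcomp Require Import zify.
From Stdlib Require Import ClassicalEpsilon Classical.
Require Import Defs.
Set Implicit Arguments. Unset Strict Implicit. Unset Printing Implicit Defensive.
Import Order.TTheory GRing.Theory Num.Theory.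
Local Open Scope ring_scope.


Section Cat.
Variables (k : fieldType) (C : kcat k).
Hypothesis hL : klinear_cat C.

Lemma compA (X Y Z W : ob C) (h : hom C Z W) (g : hom C Y Z) (f : hom C X Y) :
  comp h (comp g f) = comp (comp h g) f.
Proof. by case: hL => H _. Qed.
Lemma comp1l (X Y : ob C) (f : hom C X Y) : comp (idm Y) f = f.
Proof. by case: hL => _ [H _]. Qed.
Lemma comp1r (X Y : ob C) (f : hom C X Y) : comp f (idm X) = f.
Proof. by case: hL => _ [_ [H _]]. Qed.
Lemma compDZl (X Y Z : ob C) (c : k) (g g' : hom C Y Z) (f : hom C X Y) :
  comp (c *: g + g') f = c *: comp g f + comp g' f.
Proof. by case: hL => _ [_ [_ [H _]]]. Qed.
Lemma compDZr (X Y Z : ob C) (c : k) (g : hom C Y Z) (f f' : hom C X Y) :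
  comp g (c *: f + f') = c *: comp g f + comp g f'.
Proof. by case: hL => _ [_ [_ [_ H]]]. Qed.
Lemma compDl (X Y Z : ob C) (g g' : hom C Y Z) (f : hom C X Y) :
  comp (g + g') f = comp g f + comp g' f.
Proof. by have := compDZl 1 g g' f; rewrite !scale1r. Qed.
Lemma compDr (X Y Z : ob C) (g : hom C Y Z) (f f' : hom C X Y) :
  comp g (f + f') = comp g f + comp g f'.
Proof. by have := compDZr 1 g f f'; rewrite !scale1r. Qed.
Lemma comp0l (X Y Z : ob C) (f : hom C X Y) : comp (0 : hom C Y Z) f = 0.
Proof. by apply: (addrI (comp (0 : hom C Y Z) f)); rewrite -compDl !addr0. Qed.
Lemma comp0r (X Y Z : ob C) (g : hom C Y Z) : comp g (0 : hom C X Y) = 0.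
Proof. by apply: (addrI (comp g (0 : hom C X Y))); rewrite -compDr !addr0. Qed.
Lemma compZl (X Y Z : ob C) (c : k) (g : hom C Y Z) (f : hom C X Y) :
  comp (c *: g) f = c *: comp g f.
Proof. by have := compDZl c g 0 f; rewrite !addr0 comp0l addr0. Qed.
Lemma compZr (X Y Z : ob C) (c : k) (g : hom C Y Z) (f : hom C X Y) :
  comp g (c *: f) = c *: comp g f.
Proof. by have := compDZr c g f 0; rewrite !addr0 comp0r addr0. Qed.
Lemma compNl (X Y Z : ob C) (g : hom C Y Z) (f : hom C X Y) : comp (- g) f = - comp g f.
Proof. by rewrite -scaleN1r compZl scaleN1r. Qed.
Lemma compNr (X Y Z : ob C) (g : hom C Y Z) (f : hom C X Y) : comp g (- f) = - comp g f.
Proof. by rewrite -scaleN1r compZr scaleN1r. Qed.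
Lemma comp_sumr (X Y Z : ob C) (g : hom C Y Z) N (F : 'I_N -> hom C X Y) :
  comp g (\sum_(t < N) F t) = \sum_(t < N) comp g (F t).
Proof.
elim/big_rec2: _ => [|t y1 y2 _ <-]; first by rewrite comp0r.
by rewrite compDr.
Qed.
End Cat.


Lemma Zl_eq (k : fieldType) (x : Zl k) : x = 0.
Proof. exact: thinmx0. Qed.

Section AEl.
Variables (k : fieldType) (C : kcat k) (E : int -> ob C).
Hypothesis hL : klinear_cat C.

Notation AEc := (AEc E).
Notation emb := (@AE_emb _ _ E _ _).
Notation toK := (@AE_toK _ _ E _ _).
Notation toH := (@AE_toHom _ _ E _ _).
Notation ofH := (@AE_ofHom _ _ E _ _).
Notation ofK := (@AE_ofK _ _ E).

Lemma idh_eq i : idh E i i = idm (E i).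
Proof. rewrite /idh; case: eqP => // e; by rewrite (eq_irrelevance e erefl). Qed.
Lemma idh_neq i j : i != j -> idh E i j = 0.
Proof. rewrite /idh; case: eqP => //. Qed.

Lemma AE_lt i j : i < j ->
  (forall a : AEc i j, toK a = 0 /\ emb a = toH a /\ ofH (toH a) = a) /\
  (forall h, toH (ofH h : AEc i j) = h) /\ (forall c, ofK i j c = 0).
Proof.
move=> lt; have ne : i != j by rewrite lt_neqAle in lt; case/andP: lt.
rewrite /AE_emb /AE_toHom /AE_ofHom /AE_toK /AE_ofK; rewrite (idh_neq ne).
rewrite /AEc; case: (i < j) lt => // _.
by split => // a; rewrite scaler0 addr0.
Qed.

Lemma AE_gt i j : j < i ->
  (forall a : AEc i j, a = 0 /\ toK a = 0 /\ emb a = 0 /\ toH a = 0) /\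
  (forall h, (ofH h : AEc i j) = 0) /\ (forall c, ofK i j c = 0).
Proof.
move=> lt; have ne : i != j by rewrite eq_sym; rewrite lt_neqAle in lt; case/andP: lt.
have nlt : (i < j) = false by apply/negbTE; rewrite -leNgt ltW.
rewrite /AE_emb /AE_toHom /AE_ofHom /AE_toK /AE_ofK; rewrite (idh_neq ne).
rewrite /AEc; case: (i < j) nlt => // _.
move: ne; case: (i == j) => //= _.
split; first by move=> a; rewrite (Zl_eq a) scaler0 addr0.
by split=> *; apply: Zl_eq.
Qed.

Lemma AE_eq i :
  (forall a : AEc i i, toH a = 0 /\ emb a = toK a *: idm (E i) /\ ofK i i (toK a) = a) /\
  (forall c, toK (ofK i i c) = c) /\ (forall h, (ofH h : AEc i i) = 0).
Proof.
rewrite /AE_emb /AE_toHom /AE_ofHom /AE_toK /AE_ofK idh_eq.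
rewrite /AEc; case: (i < i) (ltxx i) => // _.
rewrite eqxx; split => // a; by rewrite add0r.
Qed.
End AEl.


Section AEl2.
Variables (k : fieldType) (C : kcat k) (E : int -> ob C).
Hypothesis hL : klinear_cat C.

Notation AEc := (AEc E).
Notation emb := (@AE_emb _ _ E _ _).
Notation toK := (@AE_toK _ _ E _ _).
Notation toH := (@AE_toHom _ _ E _ _).
Notation ofH := (@AE_ofHom _ _ E _ _).
Notation ofK := (@AE_ofK _ _ E).

Lemma toK_lin i j c (a b : AEc i j) : toK (c *: a + b) = c * toK a + toK b.
Proof.
rewrite /AE_toK; move: a b; rewrite /AEc; case: (i < j) => a b; first by rewrite mulr0 addr0.
by move: a b; case: (i == j) => a b //; rewrite mulr0 addr0.
Qed.
Lemma toH_lin i j c (a b : AEc i j) : toH (c *: a + b) = c *: toH a + toH b.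
Proof.
rewrite /AE_toHom; move: a b; rewrite /AEc; case: (i < j) => a b //.
by rewrite scaler0 addr0.
Qed.
Lemma ofH_lin i j c (a b : hom C (E i) (E j)) : (ofH (c *: a + b) : AEc i j) = c *: ofH a + ofH b.
Proof.
rewrite /AE_ofHom /AEc; case: (i < j) => //.
by rewrite scaler0 addr0.
Qed.
Lemma ofK_lin i j c (a b : k) : ofK i j (c * a + b) = c *: ofK i j a + ofK i j b.
Proof.
rewrite /AE_ofK /AEc; case: (i < j) => //; first by rewrite scaler0 addr0.
case: (i == j) => //; by rewrite scaler0 addr0.
Qed.
Lemma emb_lin i j c (a b : AEc i j) : emb (c *: a + b) = c *: emb a + emb b.
Proof.
rewrite /AE_emb toH_lin toK_lin scalerDl -scalerA.
by rewrite scalerDr addrACA.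
Qed.
Lemma toK0 i j : toK (0 : AEc i j) = 0.
Proof. have := toK_lin 1 (0 : AEc i j) 0; rewrite scale1r addr0 mul1r => H.
by apply: (addIr (toK (0 : AEc i j))); rewrite add0r -H. Qed.
Lemma emb0 i j : emb (0 : AEc i j) = 0.
Proof. have := emb_lin 1 (0 : AEc i j) 0; rewrite !scale1r addr0 => H.
by apply: (addIr (emb (0 : AEc i j))); rewrite add0r -H. Qed.

Lemma AE_ext i j (a b : AEc i j) : emb a = emb b -> toK a = toK b -> a = b.
Proof.
case: (ltgtP i j) => [lt|gt|eq].
- case: (AE_lt E lt) => H _ ea _.
  case: (H a) => _ [ea' <-]; case: (H b) => _ [eb' <-]; by rewrite -ea' -eb' ea.
- case: (AE_gt E gt) => H _ _ _.
  by case: (H a) => ->; case: (H b) => ->.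
- subst j; case: (AE_eq E i) => H _ _ ka.
  case: (H a) => _ [_ <-]; case: (H b) => _ [_ <-]; by rewrite ka.
Qed.

Lemma emb_mul i j l (b : AEc j l) (a : AEc i j) :
  emb (AE_mul b a) = comp (emb b) (emb a) /\ toK (AE_mul b a) = toK a * toK b.
Proof.
rewrite /AE_mul; case: ifP => [lt|nlt].
  case: (AE_lt E lt) => H [H2 _]; case: (H (ofH (comp (emb b) (emb a)))) => -> [-> _].
  split => //.
  case: (ltgtP i j) => [lij|gij|eij]; last first.
  - subst j; by case: (AE_lt E lt) => H3 _; case: (H3 b) => ->; rewrite mulr0.
  - by case: (AE_gt E gij) => H3 _; case: (H3 a) => _ [-> _]; rewrite mul0r.
  - by case: (AE_lt E lij) => H3 _; case: (H3 a) => -> _; rewrite mul0r.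
have [eil|neil] := eqVneq i l.
- subst l; case: (AE_eq E i) => H [H2 _]; rewrite H2; case: (H (ofK i i (toK a * toK b))) => _ [-> _].
  rewrite H2; split => //.
  case: (ltgtP i j) => [lij|gij|eij].
  + case: (AE_gt E lij) => H3 _; case: (H3 b) => _ [-> [-> _]].
    by rewrite mulr0 scale0r comp0l.
  + case: (AE_gt E gij) => H3 _; case: (H3 a) => _ [-> [-> _]].
    by rewrite mul0r scale0r comp0r.
  + subst j; case: (H a) => _ [-> _]; case: (H b) => _ [-> _].
    by rewrite compZl // compZr // comp1l // scalerA mulrC.
- have gil : l < i by rewrite lt_neqAle eq_sym neil /= leNgt nlt.
  case: (AE_gt E gil) => H [_ H2]; rewrite H2; case: (H 0) => _ [-> [-> _]].
  case: (ltgtP i j) => [lij|gij|eij].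
  + have glj : l < j by apply: lt_trans gil lij.
    case: (AE_gt E glj) => H3 _; case: (H3 b) => _ [-> [-> _]].
    by rewrite mulr0 comp0l.
  + case: (AE_gt E gij) => H3 _; case: (H3 a) => _ [-> [-> _]].
    by rewrite mul0r comp0r.
  + subst j; case: (AE_gt E gil) => H3 _; case: (H3 b) => _ [-> [-> _]].
    by rewrite mulr0 comp0l.
Qed.

Lemma emb_one i : emb (ofK i i 1) = idm (E i) /\ toK (ofK i i 1) = 1.
Proof.
case: (AE_eq E i) => H [H2 _]; case: (H (ofK i i 1)) => _ [-> _].
by rewrite H2 scale1r.
Qed.

Lemma AE_mul_linr i j l (b : AEc j l) c (a a' : AEc i j) :
  AE_mul b (c *: a + a') = c *: AE_mul b a + AE_mul b a'.
Proof.
apply: AE_ext.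
  by rewrite emb_lin !(proj1 (emb_mul _ _)) emb_lin compDZr.
by rewrite toK_lin !(proj2 (emb_mul _ _)) toK_lin mulrDl mulrA.
Qed.
Lemma AE_mul_linl i j l c (b b' : AEc j l) (a : AEc i j) :
  AE_mul (c *: b + b') a = c *: AE_mul b a + AE_mul b' a.
Proof.
apply: AE_ext.
  by rewrite emb_lin !(proj1 (emb_mul _ _)) emb_lin compDZl.
by rewrite toK_lin !(proj2 (emb_mul _ _)) toK_lin mulrDr mulrCA.
Qed.
Lemma AE_mulA i j l p (g : AEc l p) (b : AEc j l) (a : AEc i j) :
  AE_mul (AE_mul g b) a = AE_mul g (AE_mul b a).
Proof.
apply: AE_ext.
  by rewrite !(proj1 (emb_mul _ _)) compA.
by rewrite !(proj2 (emb_mul _ _)) mulrA.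
Qed.
Lemma AE_mul1r i j (a : AEc i j) : AE_mul (ofK j j 1) a = a.
Proof.
apply: AE_ext.
  by rewrite (proj1 (emb_mul _ _)) (proj1 (emb_one _)) comp1l.
by rewrite (proj2 (emb_mul _ _)) (proj2 (emb_one _)) mulr1.
Qed.
Lemma AE_mulr1 i j (a : AEc i j) : AE_mul a (ofK i i 1) = a.
Proof.
apply: AE_ext.
  by rewrite (proj1 (emb_mul _ _)) (proj1 (emb_one _)) comp1r.
by rewrite (proj2 (emb_mul _ _)) (proj2 (emb_one _)) mul1r.
Qed.
Lemma AE_mul0l i j l (a : AEc i j) : AE_mul (0 : AEc j l) a = 0.
Proof.
apply: AE_ext; first by rewrite (proj1 (emb_mul _ _)) !emb0 comp0l.
by rewrite (proj2 (emb_mul _ _)) !toK0 mulr0.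
Qed.
Lemma AE_mul0r i j l (b : AEc j l) : AE_mul b (0 : AEc i j) = 0.
Proof.
apply: AE_ext; first by rewrite (proj1 (emb_mul _ _)) !emb0 comp0r.
by rewrite (proj2 (emb_mul _ _)) !toK0 mul0r.
Qed.
End AEl2.


Section Mods.
Variables (k : fieldType) (C : kcat k) (E : int -> ob C).
Hypothesis hL : klinear_cat C.
Notation A := (AE E).

Definition modOK (M : zmod A) : Prop :=
 [/\ forall i j (g : mc M j) c (a b : AEc E i j), act g (c *: a + b) = c *: act g a + act g b,
     forall i j (g h : mc M j) (a : AEc E i j), act (g + h) a = act g a + act h a,
     forall i j l (g : mc M l) (b : AEc E j l) (a : AEc E i j), act (act g b) a = act g (AE_mul b a)
   & forall i (g : mc M i), act g (AE_ofK E i i 1) = g].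

Lemma act0l M (hM : modOK M) i j (a : AEc E i j) : act (0 : mc M j) a = 0.
Proof.
case: hM => _ H _ _; have := H i j 0 0 a; rewrite addr0 => H2.
by apply: (addIr (act (0 : mc M j) a)); rewrite add0r -H2.
Qed.
Lemma act0r M (hM : modOK M) i j (g : mc M j) : act g (0 : AEc E i j) = 0.
Proof.
case: hM => H _ _ _; have := H i j g 1 0 0; rewrite !scale1r addr0 => H2.
by apply: (addIr (act g (0 : AEc E i j))); rewrite add0r -H2.
Qed.

Lemma Pmod_ok j : modOK (Pmod A j).
Proof.
split => /=.
- by move=> *; rewrite AE_mul_linr.
- by move=> i l g h a; have := AE_mul_linl hL 1 g h a; rewrite !scale1r.
- by move=> *; rewrite AE_mulA.
- by move=> *; rewrite AE_mulr1.
Qed.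

Lemma zero_ok : modOK (zero_mod A).
Proof.
split => /=; try by move=> *; rewrite ?scaler0 ?addr0.
by move=> i g; rewrite (Zl_eq g).
Qed.

Lemma sum_ok M N : modOK M -> modOK N -> modOK (sum_mod M N).
Proof.
case=> [M1 M2 M3 M4] [N1 N2 N3 N4]; split => /=.
- by move=> i j g c a b; rewrite M1 N1.
- by move=> i j g h a; rewrite M2 N2.
- by move=> *; rewrite M3 N3.
- by move=> i [g1 g2]; rewrite M4 N4.
Qed.

Lemma Pfree_ok js : modOK (Pfree A js).
Proof. elim: js => [|j js IH] /=; [exact: zero_ok | exact: (sum_ok (Pmod_ok j) IH)]. Qed.

Lemma zhom0 (M N : zmod A) (phi : zhom M N) : is_zhom phi -> forall i, @hf _ _ _ _ phi i 0 = 0.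
Proof.
case=> H _ i; have := H i 1 0 0; rewrite !scale1r addr0 => H2.
by apply: (addIr (@hf _ _ _ _ phi i 0)); rewrite add0r -H2.
Qed.
Lemma zhomD (M N : zmod A) (phi : zhom M N) : is_zhom phi -> forall i (x y : mc M i), hf phi (x + y) = hf phi x + hf phi y.
Proof. by case=> H _ i x y; have := H i 1 x y; rewrite !scale1r. Qed.

Fixpoint tup (F : int -> Type) (js : seq int) : Type :=
  match js with [::] => unit | j :: js' => (F j * tup F js')%type end.

Fixpoint evalM (M : zmod A) (js : seq int) : tup (fun j => mc M j) js -> forall i, mc (Pfree A js) i -> mc M i :=
  match js return tup (fun j => mc M j) js -> forall i, mc (Pfree A js) i -> mc M i with
  | [::] => fun _ i _ => 0
  | j :: js' => fun g i x => act g.1 x.1 + @evalM M js' g.2 i x.2 end.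

Definition evalH M js (g : tup (fun j => mc M j) js) : zhom (Pfree A js) M :=
  @ZHom _ _ (Pfree A js) M (evalM g).

Lemma evalH_zhom M (hM : modOK M) js (g : tup (fun j => mc M j) js) : is_zhom (evalH g).
Proof.
rewrite /evalH; case: (hM) => M1 M2 M3 M4.
elim: js g => [|j js IH] g /=.
  split => /=; first by move=> *; rewrite scaler0 addr0.
  by move=> i j x a; rewrite act0l.
case: (IH g.2) => /= I1 I2; split => /=.
  by move=> i c x y; rewrite M1 I1 scalerDr addrACA.
by move=> i l x a; rewrite M2 M3 I2.
Qed.

Lemma Pf_pair j js i (a a' : AEc E i j) (x x' : mc (Pfree A js) i) :
  a = a' -> x = x' -> ((a, x) : mc (Pfree A (j :: js)) i) = (a', x').
Proof. by move=> -> ->. Qed.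

Lemma decomp M (hM : modOK M) js (phi : zhom (Pfree A js) M) : is_zhom phi ->
  exists g : tup (fun j => mc M j) js, forall i (x : mc (Pfree A js) i), hf phi x = evalM g x.
Proof.
elim: js phi => [|j js IH] phi hphi.
  exists tt => i x; by rewrite (Zl_eq x) zhom0.
pose phi' := @ZHom _ _ (Pfree A js) M (fun i (y : mc (Pfree A js) i) =>
   hf phi ((0, y) : mc (Pfree A (j :: js)) i)).
have hphi' : is_zhom phi'.
  case: hphi => H1 H2; split => /=.
    move=> i c x y; rewrite -H1 /=; congr (hf phi _).
    apply: (@eq_trans _ _ ((c *: (0 : AEc E i j) + 0, c *: x + y))); last by [].
    by rewrite scaler0 addr0.
  move=> i l x a; rewrite -H2 /=; congr (hf phi _).
  apply: (@eq_trans _ _ ((AE_mul (0 : AEc E l j) a, act x a))); last by [].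
  by rewrite AE_mul0l.
case: (IH phi' hphi') => g' Hg'.
exists (hf phi ((AE_ofK E j j 1, 0) : mc (Pfree A (j :: js)) j), g') => i x.
case: x => x1 x2.
have E1 : ((x1, x2) : mc (Pfree A (j :: js)) i) =
   act ((AE_ofK E j j 1, 0) : mc (Pfree A (j :: js)) j) x1 + (0, x2).
  apply: (@eq_trans _ _ (((AE_mul (AE_ofK E j j 1) x1 + 0, act (0 : mc (Pfree A js) j) x1 + x2)) : mc (Pfree A (j :: js)) i)); last by [].
  rewrite (AE_mul1r hL); have h0 := act0l (Pfree_ok js) x1; apply: Pf_pair; [by rewrite addr0 | by rewrite h0 add0r].
rewrite {1}E1 (zhomD hphi) (proj2 hphi) /= -Hg' //.
Qed.
End Mods.


Section Gens.
Variables (k : fieldType) (C : kcat k) (E : int -> ob C).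
Hypothesis hL : klinear_cat C.
Notation A := (AE E).

Fixpoint tupOf (M : zmod A) (G : seq {j : int & mc M j}) : tup (fun j => mc M j) (map tag G) :=
  match G return tup (fun j => mc M j) (map tag G) with
  | [::] => tt | g :: G' => (tagged g, tupOf G') end.

Definition ImG (M : zmod A) (G : seq {j : int & mc M j}) i (y : mc M i) :=
  exists x : mc (Pfree A (map tag G)) i, evalM (tupOf G) x = y.

Definition closedS (M : zmod A) (S : forall i, mc M i -> Prop) :=
  [/\ forall i, S i 0, forall i c (y y' : mc M i), S i y -> S i y' -> S i (c *: y + y')
    & forall i j (y : mc M j) (a : AEc E i j), S j y -> S i (act y a)].

Lemma closedD (M : zmod A) S (hS : @closedS M S) i (y y' : mc M i) : S i y -> S i y' -> S i (y + y').
Proof. by case: hS => _ H _ a b; have := H i 1 y y' a b; rewrite scale1r. Qed.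
Lemma closedZ (M : zmod A) S (hS : @closedS M S) i c (y : mc M i) : S i y -> S i (c *: y).
Proof. by case: hS => H0 H _ a; have := H i c y 0 a (H0 i); rewrite addr0. Qed.
Lemma closedN (M : zmod A) S (hS : @closedS M S) i (y : mc M i) : S i y -> S i (- y).
Proof. by move=> a; rewrite -scaleN1r; apply: closedZ. Qed.
Lemma closed_sum (M : zmod A) S (hS : @closedS M S) i N (F : 'I_N -> mc M i) :
  (forall t, S i (F t)) -> S i (\sum_(t < N) F t).
Proof.
move=> H; elim/big_rec: _ => [|t y _ Hy]; first by case: hS.
exact: closedD.
Qed.

Lemma ImG_closed (M : zmod A) (hM : modOK M) (G : seq {j : int & mc M j}) : closedS (@ImG M G).
Proof.
have [H1 H2] := evalH_zhom hM (tupOf G).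
split.
- move=> i; exists 0; exact: (zhom0 (evalH_zhom hM (tupOf G))).
- move=> i c y y' [x <-] [x' <-]; exists (c *: x + x'); exact: H1.
- move=> i j y a [x <-]; exists (act x a); exact: H2.
Qed.

Lemma ImG_gen (M : zmod A) (hM : modOK M) (G : seq {j : int & mc M j}) g : List.In g G -> ImG G (tagged g).
Proof.
elim: G => [|g' G IH] //= [->|/IH [x Hx]].
- exists ((AE_ofK E (tag g) (tag g) 1, 0) : mc (Pfree A (map tag (g :: G))) (tag g)) => /=.
  have := zhom0 (evalH_zhom hM (tupOf G)) (tag g) => /= ->.
  by case: hM => _ _ _ ->; rewrite addr0.
- exists ((0, x) : mc (Pfree A (map tag (g' :: G))) (tag g)) => /=.
  by rewrite Hx (act0r hM) add0r.
Qed.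

Lemma ImG_min (M : zmod A) (G : seq {j : int & mc M j}) (S : forall i, mc M i -> Prop) : closedS S ->
  (forall g, List.In g G -> S (tag g) (tagged g)) -> forall i (y : mc M i), ImG G y -> S i y.
Proof.
move=> hS; elim: G => [|g G IH] HG i y [x <-] /=; first by case: hS.
apply: closedD => //; first by case: hS => _ _; apply; apply: HG; left.
apply: IH; last by exists x.2.
by move=> g' H; apply: HG; right.
Qed.

Lemma fg_of_gens (M : zmod A) (hM : modOK M) (S : forall i, mc M i -> Prop) (G : seq {j : int & mc M j}) :
  closedS S -> (forall g, List.In g G -> S (tag g) (tagged g)) ->
  (forall i (y : mc M i), S i y -> ImG G y) -> fg_sub S.
Proof.
move=> hS HG HS; exists (map tag G), (evalH (tupOf G)); split; first exact: evalH_zhom.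
move=> i y; split; first exact: HS.
by move=> [x Hx]; apply: (ImG_min hS HG); exists x.
Qed.

Lemma ImG_app (M : zmod A) (hM : modOK M) (G1 G2 : seq {j : int & mc M j}) i (y : mc M i) :
  ImG G1 y \/ ImG G2 y -> ImG (G1 ++ G2) y.
Proof.
have H : forall G, (forall g, List.In g G -> List.In g (G1 ++ G2)) -> ImG G y -> ImG (G1 ++ G2) y.
  move=> G HG; apply: (ImG_min (ImG_closed hM (G1 ++ G2))) => g Hg.
  by apply: ImG_gen => //; apply: HG.
case=> H'; apply: (H _ _ H') => g Hg; apply: List.in_or_app; by [left|right].
Qed.
End Gens.


Section Span.
Variable k : fieldType.

Fixpoint lspan (V : lmodType k) (s : seq V) (x : V) : Prop :=
  match s with
  | [::] => x = 0
  | w :: s' => exists c y, lspan s' y /\ x = c *: w + y end.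

Definition subsp (V : lmodType k) (P : V -> Prop) :=
  P 0 /\ forall c x y, P x -> P y -> P (c *: x + y).

Lemma lspan_sub (V : lmodType k) (s : seq V) : subsp (lspan s).
Proof.
elim: s => [|w s [IH0 IH]] /=.
  by split => // c x y -> ->; rewrite scaler0 addr0.
split; first by exists 0, 0; rewrite scale0r addr0.
move=> c x y [c1 [y1 [h1 ->]]] [c2 [y2 [h2 ->]]].
exists (c * c1 + c2), (c *: y1 + y2); split; first exact: IH.
by rewrite scalerDr scalerA scalerDl addrACA.
Qed.

Lemma subspD (V : lmodType k) (P : V -> Prop) : subsp P -> forall x y, P x -> P y -> P (x + y).
Proof. by case=> _ H x y a b; have := H 1 x y a b; rewrite scale1r. Qed.
Lemma subspZ (V : lmodType k) (P : V -> Prop) : subsp P -> forall c x, P x -> P (c *: x).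
Proof. by case=> H0 H c x a; have := H c x 0 a H0; rewrite addr0. Qed.

Lemma lspan_min (V : lmodType k) (s : seq V) (P : V -> Prop) :
  subsp P -> (forall w, List.In w s -> P w) -> forall x, lspan s x -> P x.
Proof.
move=> hP; elim: s => [|w s IH] Hs x /=; first by move=> ->; case: hP.
move=> [c [y [hy ->]]]; case: hP => _ H; apply: H; first by apply: Hs; left.
by apply: IH => // w' h; apply: Hs; right.
Qed.

Lemma lspan_mem (V : lmodType k) (s : seq V) w : List.In w s -> lspan s w.
Proof.
elim: s => [|w' s IH] //= [->|h].
  by exists 1, 0; split; [case: (lspan_sub s)| rewrite scale1r addr0].
by exists 0, w; split; [exact: IH | rewrite scale0r add0r].
Qed.

Lemma fin_dim_lspan (V : lmodType k) : fin_dim V -> exists s : seq V, forall x, lspan s x.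
Proof.
case=> n [v Hv].
suff [s Hs] : exists s : seq V, forall c : 'I_n -> k, lspan s (\sum_(t < n) c t *: v t).
  by exists s => x; case: (Hv x) => c ->.
elim: n v {Hv} => [|n IH] v.
  by exists [::] => c; rewrite big_ord0.
case: (IH (fun t => v (lift ord0 t))) => s Hs.
exists (v ord0 :: s) => c /=; rewrite big_ord_recl.
exists (c ord0), (\sum_(i < n) c (lift ord0 i) *: v (lift ord0 i)).
split; [exact: (Hs (fun t => c (lift ord0 t))) | by []].
Qed.

Lemma sub_fin_dim (V : lmodType k) (s : seq V) (P : V -> Prop) :
  subsp P -> (forall x, P x -> lspan s x) ->
  exists g : seq V, (forall w, List.In w g -> P w) /\ forall x, P x -> lspan g x.
Proof.
elim: s P => [|w s IH] P hP Hs.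
  exists [::]; split => // x /Hs //.
case: (classic (forall x, P x -> lspan s x)) => [H|H]; first exact: IH.
have [p0 [Pp0 Np0]] : exists p0, P p0 /\ ~ lspan s p0.
  apply: NNPP => N; apply: H => x Px; apply: NNPP => Nx; apply: N; by exists x.
case: (Hs p0 Pp0) => c0 [y0 [hy0 e0]].
have c0n : c0 != 0.
  apply/eqP => c00; apply: Np0; by rewrite e0 c00 scale0r add0r.
pose P' := fun x => P x /\ lspan s x.
have hP' : subsp P'.
  split; first by split; [case: hP | case: (lspan_sub s)].
  move=> c x y [a1 a2] [b1 b2]; split; [case: hP => _; apply | case: (lspan_sub s) => _; apply] => //.
have [g [Hg1 Hg2]] : exists g : seq V, (forall w, List.In w g -> P' w) /\ forall x, P' x -> lspan g x.
  by apply: IH => // x [].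
exists (p0 :: g); split.
  by move=> w' [<-|h] //; case: (Hg1 w' h).
move=> x Px; case: (Hs x Px) => c [y [hy ex]].
exists (c / c0), (x - (c / c0) *: p0); split; last by rewrite addrC subrK.
apply: Hg2; split.
  by apply: (subspD hP) => //; rewrite -scaleNr; apply: (subspZ hP).
have -> : x - (c / c0) *: p0 = y - (c / c0) *: y0.
  rewrite ex e0 scalerDr scalerA mulfVK // opprD addrACA subrr add0r //.
apply: (subspD (lspan_sub s)) => //; rewrite -scaleNr; exact: (subspZ (lspan_sub s)).
Qed.

Lemma lspan_map (V W : lmodType k) (f : V -> W) (s : seq V) x :
  (forall c x y, f (c *: x + y) = c *: f x + f y) -> lspan s x -> lspan (map f s) (f x).
Proof.
move=> hf; have f0 : f 0 = 0.
  have := hf 1 0 0; rewrite !scale1r !addr0 => H.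
  by apply: (addIr (f 0)); rewrite add0r -H.
elim: s x => [|w s IH] x /=; first by move=> ->.
by move=> [c [y [hy ->]]]; exists c, (f y); split; [exact: IH | exact: hf].
Qed.

Lemma lspan_app (V : lmodType k) (s1 s2 : seq V) x1 x2 :
  lspan s1 x1 -> lspan s2 x2 -> lspan (s1 ++ s2) (x1 + x2).
Proof.
elim: s1 x1 => [|w s IH] x1 /=; first by move=> -> h; rewrite add0r.
move=> [c [y [hy ->]]] h2; exists c, (y + x2); split; first exact: IH.
by rewrite addrA.
Qed.
End Span.


Opaque AE_emb.
Section Biprod.
Variables (k : fieldType) (C : kcat k) (E : int -> ob C).
Hypothesis hA : abelian C.
Notation A := (AE E).
Let hL : klinear_cat C. Proof. by case: hA. Qed.

Fixpoint evalHom (X : ob C) (js : seq int) : tup (fun j => hom C (E j) X) js -> forall i, mc (Pfree A js) i -> hom C (E i) X :=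
  match js return tup (fun j => hom C (E j) X) js -> forall i, mc (Pfree A js) i -> hom C (E i) X with
  | [::] => fun _ i _ => 0
  | j :: js' => fun y i x => comp y.1 (AE_emb x.1) + @evalHom X js' y.2 i x.2 end.

Lemma biprod js : exists (S : ob C) (Phi : forall i, mc (Pfree A js) i -> hom C (E i) S)
  (Psi : forall i, hom C (E i) S -> mc (Pfree A js) i)
  (Lam : forall X, tup (fun j => hom C (E j) X) js -> hom C S X),
 [/\ (forall i c (x y : mc (Pfree A js) i), Phi i (c *: x + y) = c *: Phi i x + Phi i y),
     (forall i j (x : mc (Pfree A js) j) (a : AEc E i j), Phi i (act x a) = comp (Phi j x) (AE_emb a)),
     (forall i, all (fun j => i < j) js -> (forall x, Psi i (Phi i x) = x) /\ (forall g, Phi i (Psi i g) = g)),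
     (forall i c (g h : hom C (E i) S), Psi i (c *: g + h) = c *: Psi i g + Psi i h)
   & (forall X y i (x : mc (Pfree A js) i), comp (Lam X y) (Phi i x) = evalHom y x)].
Proof.
case: hA => _ [[Z HZ] [Hbi _]].
elim: js => [|j js [S' [Phi' [Psi' [Lam' [P1 P2 P3 P4 P5]]]]]].
  exists Z, (fun i _ => 0), (fun i _ => 0), (fun X _ => 0); split.
  - by move=> *; rewrite scaler0 addr0.
  - by move=> *; rewrite comp0l.
  - move=> i _; split => [x|g]; first by rewrite (Zl_eq x).
    by case: (HZ (E i)) => H _; apply: H.
  - by move=> *; rewrite scaler0 addr0.
  - by move=> *; rewrite comp0l.
case: (Hbi (E j) S') => B [i1 [i2 [p1 [p2 [e11 e22 e12 e21 eid]]]]].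
exists B, (fun i (x : mc (Pfree A (j :: js)) i) => comp i1 (AE_emb x.1) + comp i2 (Phi' i x.2)),
  (fun i (g : hom C (E i) B) => ((@AE_ofHom _ _ E i j (comp p1 g), Psi' i (comp p2 g)) : mc (Pfree A (j :: js)) i)),
  (fun X (y : tup (fun j => hom C (E j) X) (j :: js)) => comp y.1 p1 + comp (Lam' X y.2) p2).
split.
- move=> i c x y /=.
  rewrite emb_lin P1 !compDZr // scalerDr addrACA //.
- move=> i l x a /=.
  rewrite (proj1 (emb_mul hL _ _)) P2 compDl // !compA //.
- move=> i /= /andP [lij hall]; case: (P3 i hall) => Q1 Q2; split.
  + case=> x1 x2 /=.
    rewrite (compDr hL p1) (compDr hL p2) !compA // e11 e12 e21 e22 !comp1l // !comp0l //.
    apply: Pf_pair; last by rewrite add0r Q1.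
    by rewrite addr0; have [_ [-> ->]] := proj1 (AE_lt E lij) x1.
  + move=> g /=.
    case: (AE_lt E lij) => H [H2 _]; case: (H (@AE_ofHom _ _ E i j (comp p1 g))) => _ [-> _].
    by rewrite H2 Q2 !compA // -compDl // eid comp1l.
- move=> i c g h /=.
  apply: (@eq_trans _ _ ((c *: @AE_ofHom _ _ E i j (comp p1 g) + @AE_ofHom _ _ E i j (comp p1 h),
     c *: Psi' i (comp p2 g) + Psi' i (comp p2 h)) : mc (Pfree A (j :: js)) i)); last by [].
  by apply: Pf_pair; rewrite (compDZr hL) ?ofH_lin ?P4.
- move=> X y i x /=.
  rewrite (compDl hL (comp y.1 p1)) (compDr hL (comp y.1 p1)) (compDr hL (comp (Lam' X y.2) p2)).
  rewrite -!(compA hL) !(compA hL p1) !(compA hL p2) e11 e12 e21 e22 !(comp1l hL) !(comp0l hL) !(comp0r hL).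
  by rewrite addr0 add0r P5.
Qed.
End Biprod.



Section Fin.
Variables (k : fieldType) (C : kcat k) (E : int -> ob C).
Hypothesis hL : klinear_cat C.
Hypothesis hE : homfin_seq E.
Notation A := (AE E).

Lemma AE_scale_one i (a : AEc E i i) : a = AE_toK a *: AE_ofK E i i 1.
Proof.
apply: AE_ext.
  have := emb_lin (AE_toK a) (AE_ofK E i i 1) 0; rewrite emb0 !addr0 => ->.
  by rewrite (proj1 (emb_one E i)); case: (proj1 (AE_eq E i) a) => _ [-> _].
have := toK_lin (AE_toK a) (AE_ofK E i i 1) 0; rewrite toK0 !addr0 => ->.
by rewrite (proj2 (emb_one E i)) mulr1.
Qed.

Lemma AE_fin i j : exists s : seq (AEc E i j), forall a, lspan s a.
Proof.
case: (ltgtP i j) => [lt|gt|eq].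
- case: (fin_dim_lspan (hE i (E j))) => s Hs.
  exists (map (@AE_ofHom _ _ E i j) s) => a.
  have [_ [_ <-]] := proj1 (AE_lt E lt) a.
  by apply: lspan_map => //; apply: ofH_lin.
- exists [::] => a /=; by have [-> _] := proj1 (AE_gt E gt) a.
- subst j; exists [:: AE_ofK E i i 1] => a /=.
  by exists (AE_toK a), 0; split => //; rewrite addr0 -AE_scale_one.
Qed.

Lemma Pfree_fin js i : exists s : seq (mc (Pfree A js) i), forall x, lspan s x.
Proof.
elim: js => [|j js [sB HB]].
  by exists [::] => x /=; rewrite (Zl_eq x).
case: (AE_fin i j) => sA HA.
exists (map (fun a => (a, 0) : mc (Pfree A (j :: js)) i) sA ++
        map (fun b => (0, b) : mc (Pfree A (j :: js)) i) sB) => x.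
case: x => x1 x2.
have -> : ((x1, x2) : mc (Pfree A (j :: js)) i) = (x1, 0) + (0, x2).
  apply: (@eq_trans _ _ ((x1 + 0, 0 + x2) : mc (Pfree A (j :: js)) i)); last by [].
  by apply: Pf_pair; rewrite ?addr0 ?add0r.
apply: lspan_app.
  apply: (lspan_map (f := fun a => (a, 0) : mc (Pfree A (j :: js)) i)) => // c a b.
  apply: (@eq_trans _ _ ((c *: a + b, c *: 0 + 0) : mc (Pfree A (j :: js)) i)); last by [].
  by apply: Pf_pair; rewrite ?scaler0 ?addr0.
apply: (lspan_map (f := fun a => (0, a) : mc (Pfree A (j :: js)) i)) => // c a b.
apply: (@eq_trans _ _ ((c *: 0 + 0, c *: a + b) : mc (Pfree A (j :: js)) i)); last by [].
by apply: Pf_pair; rewrite ?scaler0 ?addr0.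
Qed.

Lemma Pfree_zero js i : all (fun j => j < i) js -> forall x : mc (Pfree A js) i, x = 0.
Proof.
elim: js => [|j js IH] /=; first by move=> _ x; rewrite (Zl_eq x).
case/andP => lt hall [x1 x2].
apply: (@eq_trans _ _ ((0, 0) : mc (Pfree A (j :: js)) i)); last by [].
apply: Pf_pair; first by have [-> _] := proj1 (AE_gt E lt) x1.
exact: IH.
Qed.
End Fin.



Lemma lowbound (n0 : int) (js : seq int) : exists L, L < n0 /\ all (fun j => L < j) js.
Proof.
elim: js => [|j js [L [h1 h2]]]; first by exists (n0 - 1); split => //; lia.
exists (if L < j then L else j - 1); split.
  case: (ltP L j) => h; lia.
rewrite /=; apply/andP; split; first by case: (ltP L j) => h; lia.
apply/allP => x hx; have := allP h2 x hx; case: (ltP L j) => h; lia.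
Qed.

Lemma lowbound2 (a b : int) (s : seq int) : exists n', n' <= a /\ n' <= b /\ all (fun j => n' <= j) s.
Proof.
elim: s => [|j s [L [h1 [h2 h3]]]]; first by exists (if a < b then a else b); case: (ltP a b) => h; (split; [lia|split; [lia|done]]).
exists (if L < j then L else j); split; first by case: (ltP L j) => h; lia.
split; first by case: (ltP L j) => h; lia.
rewrite /=; apply/andP; split; first by case: (ltP L j) => h; lia.
apply/allP => x hx; have := allP h3 x hx; case: (ltP L j) => h; lia.
Qed.

Lemma upbound (js : seq int) : exists U, all (fun j => j <= U) js.
Proof.
elim: js => [|j js [U hU]]; first by exists 0.
exists (if U < j then j else U) => /=; apply/andP; split; first by case: (ltP U j) => h; lia.
apply/allP => x hx; have := allP hU x hx; case: (ltP U j) => h; lia.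
Qed.

Section Ker.
Variables (k : fieldType) (C : kcat k) (E : int -> ob C).
Hypothesis hA : abelian C.
Hypothesis hE : homfin_seq E.
Hypothesis hC : coherent_seq E.
Notation A := (AE E).
Let hL : klinear_cat C. Proof. by case: hA. Qed.

Fixpoint tmap (F G : int -> Type) (f : forall j, F j -> G j) js : tup F js -> tup G js :=
  match js return tup F js -> tup G js with
  | [::] => fun _ => tt
  | j :: js' => fun t => (f j t.1, @tmap F G f js' t.2) end.

Definition lowrep (M : zmod A) (X : ob C) (n0 : int) (rho : forall i, mc M i -> hom C (E i) X)
  (sigma : forall j, mc M j -> hom C (E j) X) :=
  [/\ forall i, i < n0 -> forall y y' : mc M i, rho i (y + y') = rho i y + rho i y',
      forall i, i < n0 -> forall y : mc M i, rho i y = 0 -> y = 0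
    & forall i j (g : mc M j) (a : AEc E i j), i < n0 -> rho i (act g a) = comp (sigma j g) (AE_emb a)].

Lemma rho0 M X n0 rho sigma (hr : @lowrep M X n0 rho sigma) i : i < n0 -> rho i 0 = 0.
Proof.
case: hr => H _ _ lt; have := H i lt 0 0; rewrite addr0 => H2.
by apply: (addIr (rho i 0)); rewrite add0r -H2.
Qed.

Lemma rho_eval M X n0 rho sigma (hr : @lowrep M X n0 rho sigma) js (g : tup (fun j => mc M j) js) i
  (x : mc (Pfree A js) i) : i < n0 -> rho i (evalM g x) = evalHom (tmap sigma g) x.
Proof.
move=> lt; elim: js g x => [|j js IH] g x /=; first exact: (rho0 hr).
by case: hr => H _ H3; rewrite H // H3 // IH.
Qed.

Lemma emb_ofH i j (h : hom C (E i) (E j)) : i < j -> AE_emb (@AE_ofHom _ _ E i j h) = h.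
Proof.
move=> lt; have [_ [-> _]] := proj1 (AE_lt E lt) (@AE_ofHom _ _ E i j h).
exact: (proj1 (proj2 (AE_lt E lt))).
Qed.

Lemma ker_fg (M : zmod A) (hM : modOK M) X n0 rho sigma (hr : @lowrep M X n0 rho sigma)
  js (phi : zhom (Pfree A js) M) (hphi : is_zhom phi) :
  fg_sub (fun i (x : mc (Pfree A js) i) => hf phi x = 0).
Proof.
set S := (fun i (x : mc (Pfree A js) i) => hf phi x = 0).
have hS : closedS S.
  split.
  - move=> i; exact: (zhom0 hphi i).
  - by move=> i c y y' Hy Hy'; rewrite /S (proj1 hphi) Hy Hy' scaler0 addr0.
  - by move=> i j y a Hy; rewrite /S (proj2 hphi) Hy (act0l hM).
case: (decomp hL hM hphi) => g Hg.
pose y := tmap sigma g.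
case: (@biprod _ _ E hA js) => Sb [Phi [Psi [Lam [B1 B2 B3 B4 B5]]]].
pose x0 := Lam X y.
case: (hA) => _ [_ [_ [Hker _]]].
case: (Hker _ _ x0) => K [u [ku0 kuniv]].
have [L [Ln0 Ljs]] := lowbound n0 js.
have char : forall i (x : mc (Pfree A js) i), i <= L -> (S i x <-> comp x0 (Phi i x) = 0).
  move=> i x iL; have in0 : i < n0 by apply: le_lt_trans iL Ln0.
  rewrite /S Hg /x0 B5 -(rho_eval hr g x in0).
  split => [->|H]; first exact: (rho0 hr).
  by case: hr => _ H2 _; apply: H2.
have B3' : forall i, i <= L -> (forall x, Psi i (Phi i x) = x) /\ (forall g, Phi i (Psi i g) = g).
  move=> i iL; apply: B3; apply/allP => j hj; have := allP Ljs j hj; lia.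
case: hC => _ hcoh.
case: (hcoh K L) => s [sL [n Hn]].
have Psi0 : forall i, Psi i 0 = 0.
  move=> i; have := B4 i 1 0 0; rewrite !scale1r !addr0 => H2.
  by apply: (addIr (Psi i 0)); rewrite add0r -H2.
have [G1 [HG1 IG1]] : exists G1 : seq {j : int & mc (Pfree A js) j},
   (forall gg, List.In gg G1 -> S (tag gg) (tagged gg)) /\
   (forall j, j \in s -> forall v : hom C (E j) K, ImG G1 (Psi j (comp u v))).
  have sL' : forall j, j \in s -> j <= L by move=> j hj; apply: (allP sL).
  elim: s sL' {Hn sL} => [|j s' IH] sL'.
    by exists [::]; split => // j.
  case: IH => [j' hj'|G1' [HG1' IG1']]; first by apply: sL'; rewrite inE hj' orbT.
  have jL : j <= L by apply: sL'; rewrite inE eqxx.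
  case: (fin_dim_lspan (hE j K)) => bs Hbs.
  pose Gj := [seq existT (fun j => mc (Pfree A js) j) j (Psi j (comp u v)) | v <- bs].
  exists (Gj ++ G1'); split.
    move=> gg Hgg; case: (List.in_app_or _ _ _ Hgg) => [/List.in_map_iff [v [e _]] | /HG1' //]; subst gg => /=.
    by rewrite (char _ _ jL) (proj2 (B3' j jL)) (compA hL) ku0 (comp0l hL).
  move=> j0; rewrite inE => /orP [/eqP -> | hj0] v; apply: (ImG_app (Pfree_ok E hL js)); last first.
    by right; exact: IG1'.
  left; apply: (lspan_min (P := fun v => ImG Gj (Psi j (comp u v)))) (Hbs v).
    case: (ImG_closed (Pfree_ok E hL js) Gj) => I0 I1 _; split.
      by rewrite (comp0r hL) Psi0.
    by move=> c a b ha hb; rewrite (compDZr hL) B4; apply: I1.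
  move=> w hw; apply: (ImG_gen (Pfree_ok E hL js) (g := existT _ j (Psi j (comp u w)))).
  exact: List.in_map.
have [n' [n'n [n'L n's]]] := lowbound2 n L s.
have [U HU] := upbound js.
have [G2 [HG2 IG2]] : exists G2 : seq {j : int & mc (Pfree A js) j},
   (forall gg, List.In gg G2 -> S (tag gg) (tagged gg)) /\
   (forall i (x : mc (Pfree A js) i), n' <= i -> i <= U -> S i x -> ImG G2 x).
  suff: forall N : nat, exists G2 : seq {j : int & mc (Pfree A js) j},
     (forall gg, List.In gg G2 -> S (tag gg) (tagged gg)) /\
     (forall i (x : mc (Pfree A js) i), n' <= i -> i < n' + N%:Z -> S i x -> ImG G2 x).
    move=> /(_ (`|U - n'|.+1)) [G2 [H1 H2]]; exists G2; split => // i x a b; apply: H2 => //; lia.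
  elim=> [|N [G2 [H1 H2]]].
    by exists [::]; split => // i x a b; lia.
  pose i0 := n' + N%:Z.
  have sub0 : subsp (S i0).
    case: hS => h0 h1 _; split; [exact: h0 | exact: h1].
  case: (Pfree_fin hE js i0) => ws Hws.
  case: (sub_fin_dim sub0 (fun x _ => Hws x)) => gs [Hgs1 Hgs2].
  pose Gi := [seq existT (fun j => mc (Pfree A js) j) i0 w | w <- gs].
  exists (Gi ++ G2); split.
    move=> gg Hgg; case: (List.in_app_or _ _ _ Hgg) => [/List.in_map_iff [w [e hw]] | /H1 //]; subst gg; exact: Hgs1.
  move=> i x a b Sx; have [e|ne] := eqVneq i i0.
    subst i; apply: (ImG_app (Pfree_ok E hL js)); left.
    apply: (lspan_min (P := @ImG _ _ _ _ Gi i0)) (Hgs2 x Sx).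
      case: (ImG_closed (Pfree_ok E hL js) Gi) => I0 I1 _; split; [exact: I0 | exact: I1].
    move=> w hw; apply: (ImG_gen (Pfree_ok E hL js) (g := existT _ i0 w)).
    exact: List.in_map.
  apply: (ImG_app (Pfree_ok E hL js)); right; apply: H2 => //.
  move/eqP: ne; rewrite /i0 => ne; lia.
apply: (@fg_of_gens _ _ _ _ (Pfree_ok E hL js) S (G1 ++ G2) hS).
  by move=> gg Hgg; case: (List.in_app_or _ _ _ Hgg) => [/HG1 | /HG2].
move=> i x Sx.
case: (ltP i n') => [lt|ge].
  have iL : i <= L by lia.
  have Hx := (proj1 (char i x iL)) Sx.
  case: (kuniv _ (Phi i x) Hx) => g0 [ug0 _].
  have lin : i < n by lia.
  case: (Hn i lin g0) => N [js' [f [h [Hjs' Hg0]]]].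
  pose q := \sum_(t < N) act (Psi (js' t) (comp u (f t))) (@AE_ofHom _ _ E i (js' t) (h t)).
  have Iq : ImG (G1 ++ G2) q.
    have hI := ImG_closed (Pfree_ok E hL js) (G1 ++ G2).
    apply: (closed_sum hI) => t.
    case: hI => _ _ Hact; apply: Hact; apply: (ImG_app (Pfree_ok E hL js)); left; apply: IG1.
    exact: Hjs'.
  have Phi0 : Phi i 0 = 0.
    have := B1 i 1 0 0; rewrite !scale1r !addr0 => H2.
    by apply: (addIr (Phi i 0)); rewrite add0r -H2.
  have Phiq : Phi i q = Phi i x.
    rewrite /q -ug0 Hg0 (comp_sumr hL).
    elim/big_rec2: _ => [|t y1 y2 _ <-]; first exact: Phi0.
    have := B1 i 1 (act (Psi (js' t) (comp u (f t))) (@AE_ofHom _ _ E i (js' t) (h t))) y2.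
    rewrite !scale1r => ->; congr (_ + _).
    have jt := Hjs' t; have jtL : js' t <= L by apply: (allP sL).
    have ijt : i < js' t by have := allP n's _ jt; lia.
    by rewrite B2 (proj2 (B3' _ jtL)) emb_ofH // (compA hL).
  suff -> : x = q by [].
  by rewrite -(proj1 (B3' i iL) x) -Phiq (proj1 (B3' i iL)).
case: (leP i U) => [le|gt].
  by apply: (ImG_app (Pfree_ok E hL js)); right; apply: IG2.
have -> : x = 0.
  apply: (Pfree_zero (js := js)); apply/allP => j hj; have := allP HU j hj; lia.
by case: (ImG_closed (Pfree_ok E hL js) (G1 ++ G2)).
Qed.
End Ker.



Section Mid.
Variables (k : fieldType) (C : kcat k) (E : int -> ob C).
Notation A := (AE E).

Lemma mid_gens (M : zmod A) (hM : modOK M) (S : forall i, mc M i -> Prop) (hS : closedS S)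
  (fin : forall i, exists ws : seq (mc M i), forall x, lspan ws x) (a : int) (N : nat) :
  exists G : seq {j : int & mc M j},
     (forall gg, List.In gg G -> S (tag gg) (tagged gg)) /\
     (forall i (x : mc M i), a <= i -> i < a + N%:Z -> S i x -> ImG G x).
Proof.
elim: N => [|N [G2 [H1 H2]]].
  by exists [::]; split => // i x h1 h2; lia.
pose i0 := a + N%:Z.
have sub0 : subsp (S i0).
  case: hS => h0 h1 _; split; [exact: h0 | exact: h1].
case: (fin i0) => ws Hws.
case: (sub_fin_dim sub0 (fun x _ => Hws x)) => gs [Hgs1 Hgs2].
pose Gi := [seq existT (fun j => mc M j) i0 w | w <- gs].
exists (Gi ++ G2); split.
  move=> gg Hgg; case: (List.in_app_or _ _ _ Hgg) => [/List.in_map_iff [w [e hw]] | /H1 //]; subst gg; exact: Hgs1.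
move=> i x h1 h2 Sx; have [e|ne] := eqVneq i i0.
  subst i; apply: (ImG_app hM); left.
  apply: (lspan_min (P := @ImG _ _ _ _ Gi i0)) (Hgs2 x Sx).
    case: (ImG_closed hM Gi) => I0 I1 _; split; [exact: I0 | exact: I1].
  move=> w hw; apply: (ImG_gen hM (g := existT _ i0 w)).
  exact: List.in_map.
apply: (ImG_app hM); right; apply: H2 => //.
move/eqP: ne; rewrite /i0 => ne; lia.
Qed.
End Mid.

Section Gam.
Variables (k : fieldType) (C : kcat k) (E : int -> ob C).
Hypothesis hA : abelian C.
Hypothesis hE : homfin_seq E.
Hypothesis hC : coherent_seq E.
Notation A := (AE E).
Let hL : klinear_cat C. Proof. by case: hA. Qed.
Variables (X : ob C) (m : int).
Notation GT := (@G_to _ _ E X m _).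
Notation GO := (@G_of _ _ E X m _).

Lemma G_le i : i <= m -> (forall x : Gc E X m i, GO (GT x) = x) /\ (forall h, GT (GO h : Gc E X m i) = h).
Proof. rewrite /G_of /G_to /Gc => le; case: (i <= m) le => //. Qed.

Lemma G_gt i : m < i -> (forall x : Gc E X m i, x = 0 /\ GT x = 0) /\ (forall h, (GO h : Gc E X m i) = 0).
Proof.
move=> lt; have nle : (i <= m) = false by rewrite leNgt lt.
rewrite /G_of /G_to /Gc; case: (i <= m) nle => // _.
by split => // x; rewrite (Zl_eq x).
Qed.

Lemma GT_lin i c (x y : Gc E X m i) : GT (c *: x + y) = c *: GT x + GT y.
Proof. rewrite /G_to; move: x y; rewrite /Gc; case: (i <= m) => // x y; by rewrite scaler0 addr0. Qed.
Lemma GO_lin i c (x y : hom C (E i) X) : (GO (c *: x + y) : Gc E X m i) = c *: GO x + GO y.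
Proof. rewrite /G_of /Gc; case: (i <= m) => //; by rewrite scaler0 addr0. Qed.
Lemma GO0 i : (GO 0 : Gc E X m i) = 0.
Proof. have := GO_lin 1 (0 : hom C (E i) X) 0; rewrite !scale1r addr0 => H.
by apply: (addIr (GO 0 : Gc E X m i)); rewrite add0r -H. Qed.
Lemma GT0 i : GT (0 : Gc E X m i) = 0.
Proof. have := GT_lin 1 (0 : Gc E X m i) 0; rewrite !scale1r addr0 => H.
by apply: (addIr (GT (0 : Gc E X m i))); rewrite add0r -H. Qed.

Lemma GTGO_comp j l (x : Gc E X m l) (b : AEc E j l) :
  GT (GO (comp (GT x) (AE_emb b)) : Gc E X m j) = comp (GT x) (AE_emb b).
Proof.
case: (leP j m) => [le|gt]; first by rewrite (proj2 (G_le le)).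
rewrite (proj2 (G_gt gt)) GT0.
case: (leP l m) => [le'|gt'].
  have ljl : l < j by lia.
  by have [_ [_ [-> _]]] := proj1 (AE_gt E ljl) b; rewrite (comp0r hL).
by have [_ ->] := proj1 (G_gt gt') x; rewrite (comp0l hL).
Qed.

Lemma Gam_ok : modOK (Gamma_le E m X).
Proof.
split => /=.
- by move=> i j g c a b; rewrite emb_lin (compDZr hL) GO_lin.
- by move=> i j g h a; have := GT_lin 1 g h; rewrite !scale1r => ->; rewrite (compDl hL);
    have := GO_lin 1 (comp (GT g) (AE_emb a)) (comp (GT h) (AE_emb a)); rewrite !scale1r.
- by move=> i j l g b a; rewrite GTGO_comp -(compA hL) (proj1 (emb_mul hL _ _)).
- move=> i g; rewrite (proj1 (emb_one E i)) (comp1r hL).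
  case: (leP i m) => [le|gt]; first by rewrite (proj1 (G_le le)).
  by have [-> _] := proj1 (G_gt gt) g; rewrite GT0 GO0.
Qed.

Lemma Gam_low : @lowrep _ _ _ (Gamma_le E m X) X (m + 1) (fun i x => GT x) (fun i x => GT x).
Proof.
split => /=.
- by move=> i _ y y'; have := GT_lin 1 y y'; rewrite !scale1r.
- move=> i lt y H; have le : i <= m by lia.
  by rewrite -(proj1 (G_le le) y) H GO0.
- move=> i j g a lt; have le : i <= m by lia.
  by rewrite (proj2 (G_le le)).
Qed.
End Gam.



Section Fg.
Variables (k : fieldType) (C : kcat k) (E : int -> ob C).
Hypothesis hA : abelian C.
Hypothesis hE : homfin_seq E.
Hypothesis hC : coherent_seq E.
Notation A := (AE E).
Let hL : klinear_cat C. Proof. by case: hA. Qed.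

Section G.
Variables (X : ob C) (m : int).
Notation GT := (@G_to _ _ E X m _).
Notation GO := (@G_of _ _ E X m _).

Lemma GO_sum i N (F : 'I_N -> hom C (E i) X) :
  (GO (\sum_(t < N) F t) : Gc E X m i) = \sum_(t < N) (GO (F t) : Gc E X m i).
Proof.
elim/big_rec2: _ => [|t y1 y2 _ <-]; first exact: GO0.
by have := GO_lin m 1 (F t) y2; rewrite !scale1r.
Qed.

Lemma Gam_fg : fin_gen (Gamma_le E m X).
Proof.
rewrite /fin_gen.
have hM := Gam_ok E hA X m.
pose S := fun i (y : mc (Gamma_le E m X) i) => True.
have hS : closedS S by split.
case: hC => _ hcoh; case: (hcoh X m) => s [sm [n Hn]].
have [n' [n'n [n'm n's]]] := lowbound2 n m s.
have [G1 IG1] : exists G1 : seq {j : int & mc (Gamma_le E m X) j},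
    forall j, j \in s -> forall v : hom C (E j) X, ImG G1 (GO v : Gc E X m j).
  elim: (s) => [|j s' [G1' IG1']]; first by exists [::].
  case: (fin_dim_lspan (hE j X)) => bs Hbs.
  pose Gj := [seq existT (fun j => mc (Gamma_le E m X) j) j (GO v : Gc E X m j) | v <- bs].
  exists (Gj ++ G1') => j0; rewrite inE => /orP [/eqP -> | hj0] v; apply: (ImG_app hM); last first.
    by right; exact: IG1'.
  left; apply: (lspan_min (P := fun v => ImG Gj (GO v : Gc E X m j))) (Hbs v).
    case: (ImG_closed hM Gj) => I0 I1 _; split; first by rewrite GO0.
    by move=> c a b ha hb; rewrite (GO_lin m); apply: I1.
  move=> w hw; apply: (ImG_gen hM (g := existT _ j (GO w : Gc E X m j))).
  exact: List.in_map.
have fin : forall i, exists ws : seq (mc (Gamma_le E m X) i), forall x, lspan ws x.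
  move=> i; case: (leP i m) => [le|gt].
    case: (fin_dim_lspan (hE i X)) => bs Hbs; exists (map (fun v => GO v : Gc E X m i) bs) => x.
    rewrite -(proj1 (G_le E X le) x); apply: lspan_map => //; exact: (GO_lin m).
  exists [::] => x /=; by have [-> _] := proj1 (G_gt E X gt) x.
case: (mid_gens hM hS fin n' (`|m - n'|.+1)) => G2 [_ IG2].
apply: (fg_of_gens hM (G := G1 ++ G2) hS) => // i y _.
case: (ltP i n') => [lt|ge].
  have le : i <= m by lia.
  rewrite -(proj1 (G_le E X le) y).
  have lin : i < n by lia.
  case: (Hn i lin (GT y)) => N [js' [f [h [Hjs' ->]]]].
  have hI := ImG_closed hM (G1 ++ G2).
  rewrite GO_sum; apply: (closed_sum hI) => t.
  have jt := Hjs' t; have jm : js' t <= m by apply: (allP sm).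
  have ijt : i < js' t by have := allP n's _ jt; lia.
  have -> : (GO (comp (f t) (h t)) : Gc E X m i) =
      act (GO (f t) : mc (Gamma_le E m X) (js' t)) (@AE_ofHom _ _ E i (js' t) (h t)).
    by rewrite /= (proj2 (G_le E X jm)) emb_ofH.
  case: hI => _ _ Hact; apply: Hact; apply: (ImG_app hM); left; exact: IG1.
case: (leP i m) => [le|gt].
  apply: (ImG_app hM); right; apply: IG2 => //; lia.
have [-> _] := proj1 (G_gt E X gt) y; by case: (ImG_closed hM (G1 ++ G2)).
Qed.
End G.
End Fg.



Section PS.
Variables (k : fieldType) (C : kcat k) (E : int -> ob C).
Hypothesis hL : klinear_cat C.
Notation A := (AE E).

Lemma ofH0 i j : (@AE_ofHom _ _ E i j 0) = 0.
Proof.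
have := @ofH_lin _ _ E i j 1 0 0; rewrite !scale1r addr0 => H.
by apply: (addIr (@AE_ofHom _ _ E i j 0)); rewrite add0r -H.
Qed.

Lemma P_low j : @lowrep _ _ _ (Pmod A j) (E j) j (fun i (a : AEc E i j) => AE_emb a) (fun i (a : AEc E i j) => AE_emb a).
Proof.
split => /=.
- by move=> i _ y y'; have := emb_lin 1 y y'; rewrite !scale1r.
- move=> i lt y H; have [_ [e1 <-]] := proj1 (AE_lt E lt) y.
  by rewrite -e1 H ofH0.
- by move=> i l g a _; rewrite (proj1 (emb_mul hL _ _)).
Qed.

Lemma P_fg j : fin_gen (Pmod A j).
Proof.
have hM := Pmod_ok E hL j.
pose G := [:: existT (fun l => mc (Pmod A j) l) j (AE_ofK E j j 1)].
apply: (fg_of_gens hM (G := G)) => //.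
move=> i y _; have hI := ImG_closed hM G.
have -> : y = act (AE_ofK E j j 1 : mc (Pmod A j) j) y by rewrite /= AE_mul1r.
case: hI => _ _ Hact; apply: Hact.
by apply: (ImG_gen hM (g := existT _ j (AE_ofK E j j 1))); left.
Qed.

Lemma S_eq j : (forall x : Scar k j j, Sof j j (Sto x) = x) /\ (forall c : k, Sto (Sof j j c : Scar k j j) = c).
Proof. rewrite /Sof /Sto /Scar; case: (j == j) (eqxx j) => //. Qed.

Lemma S_neq j i : i != j -> (forall x : Scar k j i, x = 0 /\ Sto x = 0) /\ (forall c : k, Sof j i c = 0).
Proof.
rewrite /Sof /Sto /Scar; case: (i == j) => // _.
by split => // x; rewrite (Zl_eq x).
Qed.

Lemma Sto_lin j i c (x y : Scar k j i) : Sto (c *: x + y) = c * Sto x + Sto y.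
Proof. rewrite /Sto; move: x y; rewrite /Scar; case: (i == j) => // x y; by rewrite mulr0 addr0. Qed.
Lemma Sof_lin j i c (x y : k) : Sof j i (c * x + y) = c *: Sof j i x + Sof j i y.
Proof. rewrite /Sof /Scar; case: (i == j) => //; by rewrite scaler0 addr0. Qed.

Lemma toK_neq i l (a : AEc E i l) : i != l -> AE_toK a = 0.
Proof.
move=> ne; case: (ltgtP i l) => [lt|gt|eq].
- by have [-> _] := proj1 (AE_lt E lt) a.
- by have [_ [-> _]] := proj1 (AE_gt E gt) a.
- by rewrite eq eqxx in ne.
Qed.

Lemma dcoef_eq i (a : AEc E i i) : @dcoef _ A i i a = AE_toK a.
Proof.
rewrite /dcoef.
have ex : exists c : k, forall e : i = i, eq_rect i (zc A i) a i e = c *: zone A i.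
  exists (AE_toK a) => e; rewrite (eq_irrelevance e erefl) /=; exact: AE_scale_one.
have := epsilon_spec (inhabits 0) _ ex.
set c0 := epsilon _ _ => /(_ erefl) /= H.
rewrite [in RHS]H; have := toK_lin c0 (AE_ofK E i i 1) 0.
by rewrite addr0 toK0 addr0 (proj2 (emb_one E i)) mulr1.
Qed.

Lemma S_act j i l (x : Scar k j l) (a : AEc E i l) :
  Sof j i (@dcoef _ A i l a * Sto x) = Sof j i (AE_toK a * Sto x).
Proof.
have [e|ne] := eqVneq i l; first by subst l; rewrite dcoef_eq.
have [e'|ne'] := eqVneq l j.
  subst l; by rewrite !(proj2 (S_neq ne)).
by have [_ ->] := proj1 (S_neq ne') x; rewrite !mulr0.
Qed.

Lemma Smod_ok j : modOK (Smod A j).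
Proof.
split => /=.
- move=> i l g c a b; rewrite !S_act toK_lin mulrDl -mulrA.
  by rewrite Sof_lin.
- move=> i l g h a; rewrite !S_act.
  have := Sto_lin 1 g h; rewrite !scale1r mul1r => ->.
  by have := Sof_lin j i 1 (AE_toK a * Sto g) (AE_toK a * Sto h); rewrite mul1r scale1r mulrDr.
- move=> i l p g b a; rewrite !S_act (proj2 (emb_mul hL _ _)).
  have [e|ne] := eqVneq l j.
    by subst l; rewrite (proj2 (S_eq j)) mulrA.
  rewrite (proj2 (S_neq ne)); have [_ ->] := proj1 (S_neq ne) 0.
  have [e'|ne'] := eqVneq p j.
    subst p; rewrite (@toK_neq _ _ b); first by rewrite mulr0 mul0r.
    by rewrite ne.
  by have [_ ->] := proj1 (S_neq ne') g; rewrite !mulr0.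
- move=> i g; rewrite S_act (proj2 (emb_one E i)) mul1r.
  have [e|ne] := eqVneq i j; first by subst i; rewrite (proj1 (S_eq j)).
  by rewrite (proj2 (S_neq ne)); have [-> _] := proj1 (S_neq ne) g.
Qed.

Lemma S_low j : @lowrep _ _ _ (Smod A j) (E j) j (fun i _ => 0) (fun i _ => 0).
Proof.
split => /=.
- by move=> *; rewrite addr0.
- move=> i lt y _; have ne : i != j by rewrite lt_eqF.
  by have [-> _] := proj1 (S_neq ne) y.
- by move=> *; rewrite (comp0l hL).
Qed.

Lemma S_fg j : fin_gen (Smod A j).
Proof.
have hM := Smod_ok j.
pose G := [:: existT (fun l => mc (Smod A j) l) j (Sof j j 1)].
apply: (fg_of_gens hM (G := G)) => //.
move=> i y _; have hI := ImG_closed hM G.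
have [e|ne] := eqVneq i j; last first.
  by have [-> _] := proj1 (S_neq ne) y; case: hI.
subst i.
have -> : y = act (Sof j j 1 : mc (Smod A j) j) (AE_ofK E j j (Sto y)).
  rewrite /= S_act (proj2 (S_eq j)) mulr1 (proj1 (proj2 (AE_eq E j))).
  by rewrite (proj1 (S_eq j)).
case: hI => _ _ Hact; apply: Hact.
by apply: (ImG_gen hM (g := existT _ j (Sof j j 1))); left.
Qed.
End PS.

Theorem proposition2p7 (k : fieldType) (C : kcat k) (E : int -> ob C) :
  abelian C -> homfin_seq E -> coherent_seq E ->
  (forall (X : ob C) (m : int), coherent_mod (Gamma_le E m X)) /\
  coherent_zalg (AE E).
Proof.
move=> hA hE hC; have hL : klinear_cat C by case: hA.
split.
  move=> X m; split; first exact: Gam_fg.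
  move=> js phi hphi; exact: (ker_fg hA hE hC (Gam_ok E hA X m) (Gam_low E X m) hphi).
move=> j; split; split.
- exact: P_fg.
- move=> js phi hphi; exact: (ker_fg hA hE hC (Pmod_ok E hL j) (P_low E hL j) hphi).
- exact: S_fg.
- move=> js phi hphi; exact: (ker_fg hA hE hC (Smod_ok E hL j) (S_low E hL j) hphi).
Qed.
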